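(* Let $(\mathcal{M},\varphi,\psi)$ be a two-state noncommutative probability space, $n\in\mathbb{N}$ and $\pi\in\mathrm{NC}(n)$. Then for all $a_1,\dots,a_n\in\mathcal{M}$, $$\beta^{\varphi,\psi}_\pi(a_1,\dots,a_n)=\sum_{\rho\in\mathrm{NC}(n),\ \rho\ll\pi}\ \prod_{V\in\mathrm{OB}(\rho)}r_V^{\varphi,\psi}(a_1,\dots,a_n)\prod_{W\in\mathrm{IB}(\rho)}r_W^{\psi}(a_1,\dots,a_n).$$
   Context: A two-state noncommutative probability space is a unital $*$-algebra $\mathcal{M}$ with two states $\varphi,\psi$, $\psi$ tracial. $\mathrm{NC}(n)$: noncrossing partitions of $[n]$; $\mathrm{Int}(n)$: interval partitions. A block $W$ of $\pi$ is nested in a block $V\ne W$ if $\min V\le w\le\max V$ for all $w\in W$; outer blocks are those not nested in any other block, inner blocks are the others; $\mathrm{OB}(\pi)$, $\mathrm{IB}(\pi)$ denote them. For multilinear functionals $(L_n)$ and $V=\{i_1<\dots<i_s\}$, $L_V(a_1,\dots,a_n)=L_s(a_{i_1},\dots,a_{i_s})$. Boolean cumulants $\beta^\theta_n$ of a state $\theta$: $\theta(a_1\cdots a_n)=\sum_{\sigma\in\mathrm{Int}(n)}\prod_{V\in\sigma}\beta^\theta_V(a_1,\dots,a_n)$. Free cumulants $r^\psi$: $\psi(a_1\cdots a_n)=\sum_{\sigma\in\mathrm{NC}(n)}\prod_{V\in\sigma}r^\psi_V$. $c$-free cumulants $r^{\varphi,\psi}$: $\varphi(a_1\cdots a_n)=\sum_{\sigma\in\mathrm{NC}(n)}\prod_{V\in\mathrm{OB}(\sigma)}r^{\varphi,\psi}_V\prod_{W\in\mathrm{IB}(\sigma)}r^\psi_W$.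 The nested two-state Boolean cumulant functional is $\beta^{\varphi,\psi}_\pi(a_1,\dots,a_n):=\prod_{V\in\mathrm{OB}(\pi)}\beta^\varphi_V(a_1,\dots,a_n)\prod_{W\in\mathrm{IB}(\pi)}\beta^\psi_W(a_1,\dots,a_n)$. The irreducible refinement order: for $\rho,\pi\in\mathrm{NC}(n)$, $\rho\ll\pi$ if $\rho\le\pi$ in refinement order (every block of $\rho$ is contained in a block of $\pi$) and for every block $W\in\pi$, $\min W$ and $\max W$ lie in the same block of $\rho$. *)

(* Defs.v *)
From HB Require Import structures.
From mathcomp Require Import all_boot all_order all_algebra.
Set Implicit Arguments. Unset Strict Implicit. Unset Printing Implicit Defensive.
Import Order.TTheory GRing.Theory Num.Theory.
Local Open Scope ring_scope.

(* Scalars: a numeric closed field C (e.g. the complex numbers), with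
   conjugation x^* and the partial order 0 <= x meaning "x is real >= 0".
   M : a unital C-algebra with an involution star. *)

Definition is_star_involution (C : numClosedFieldType) (M : algType C)
    (star : M -> M) : Prop :=
  [/\ forall x y : M, star (x + y) = star x + star y,
      forall (c : C) (x : M), star (c *: x) = Num.conj c *: star x,
      forall x y : M, star (x * y) = star y * star x
    & forall x : M, star (star x) = x].

Definition is_state (C : numClosedFieldType) (M : algType C)
    (star : M -> M) (f : M -> C) : Prop :=
  [/\ forall (c : C) (x y : M), f (c *: x + y) = c * f x + f y,
      f 1 = 1
    & forall x : M, 0 <= f (star x * x)].

Definition is_tracial (C : numClosedFieldType) (M : algType C) (f : M -> C) :=
  forall x y : M, f (x * y) = f (y * x).

Section Partitions.
Variable n : nat.

Definition is_part (P : {set {set 'I_n}}) : bool := partition P [set: 'I_n].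

Definition noncrossing (P : {set {set 'I_n}}) : bool :=
  [forall V in P, forall W in P, (V != W) ==>
     ~~ [exists a : 'I_n, exists b : 'I_n, exists c : 'I_n, exists d : 'I_n,
           [&& (a < b)%N, (b < c)%N, (c < d)%N, a \in V, c \in V, b \in W & d \in W]]].

Definition is_NC (P : {set {set 'I_n}}) : bool := is_part P && noncrossing P.

Definition is_interval_part (P : {set {set 'I_n}}) : bool :=
  is_part P &&
  [forall V in P, forall i : 'I_n, forall j : 'I_n, forall k : 'I_n,
     [&& (i < j)%N, (j < k)%N, i \in V & k \in V] ==> (j \in V)].

Definition bmin (V : {set 'I_n}) : nat := \big[minn/n]_(i in V) (val i).
Definition bmax (V : {set 'I_n}) : nat := \max_(i in V) (val i).

Definition nested (W V : {set 'I_n}) : bool :=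
  (V != W) && [forall w in W, (bmin V <= val w <= bmax V)%N].

Definition outer_blocks (P : {set {set 'I_n}}) : {set {set 'I_n}} :=
  [set V in P | [forall W in P, ~~ nested V W]].

Definition inner_blocks (P : {set {set 'I_n}}) : {set {set 'I_n}} :=
  [set V in P | [exists W in P, nested V W]].

Definition refines (rho pi : {set {set 'I_n}}) : bool :=
  [forall V in rho, exists W in pi, V \subset W].

Definition irr_refines (rho pi : {set {set 'I_n}}) : bool :=
  refines rho pi &&
  [forall W in pi, exists V in rho, forall i in W,
     ((val i == bmin W) || (val i == bmax W)) ==> (i \in V)].

End Partitions.

(* A family (L_n) of functionals is encoded as L : seq M -> C, L_s applied
   to the list of its s arguments. L_V(a_1..a_n) = L_s(a_{i_1},..,a_{i_s})
   with i_1 < .. < i_s the elements of V (enum V is increasing). *)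
Definition restr (C M : Type) (L : seq M -> C) (n : nat) (a : 'I_n -> M)
    (V : {set 'I_n}) : C := L [seq a i | i <- enum V].

Definition is_boolean_cumulants (C : numClosedFieldType) (M : algType C)
    (theta : M -> C) (beta : seq M -> C) : Prop :=
  forall (n : nat) (a : 'I_n -> M),
    theta (\prod_(i < n) a i) =
    \sum_(s : {set {set 'I_n}} | is_interval_part s) \prod_(V in s) restr beta a V.

Definition is_free_cumulants (C : numClosedFieldType) (M : algType C)
    (psi : M -> C) (r : seq M -> C) : Prop :=
  forall (n : nat) (a : 'I_n -> M),
    psi (\prod_(i < n) a i) =
    \sum_(s : {set {set 'I_n}} | is_NC s) \prod_(V in s) restr r a V.

Definition is_cfree_cumulants (C : numClosedFieldType) (M : algType C)
    (phi : M -> C) (rpsi rc : seq M -> C) : Prop :=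
  forall (n : nat) (a : 'I_n -> M),
    phi (\prod_(i < n) a i) =
    \sum_(s : {set {set 'I_n}} | is_NC s)
      (\prod_(V in outer_blocks s) restr rc a V) *
      (\prod_(W in inner_blocks s) restr rpsi a W).

Definition beta2 (C : numClosedFieldType) (M : algType C)
    (bphi bpsi : seq M -> C) (n : nat) (pi : {set {set 'I_n}}) (a : 'I_n -> M) : C :=
  (\prod_(V in outer_blocks pi) restr bphi a V) *
  (\prod_(W in inner_blocks pi) restr bpsi a W).

(* Main.v *)
Require Import Defs.
From HB Require Import structures.
From mathcomp Require Import all_boot all_order all_algebra.
From mathcomp Require Import zify.
Set Implicit Arguments. Unset Strict Implicit. Unset Printing Implicit Defensive.
Import Order.TTheory GRing.Theory Num.Theory.

Section Hull.
Variable n : nat.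
Implicit Types V W U : {set 'I_n}.

Lemma bmin_le V (i : 'I_n) : i \in V -> bmin V <= i.
Proof.
move=> iV; rewrite /bmin.
have := mem_index_enum i; rewrite unlock; elim: (index_enum _) => //= j r IH.
rewrite inE => /orP[/eqP<-|/IH h]; first by rewrite iV geq_minl.
by case: (j \in V) => //; exact: leq_trans (geq_minr _ _) h.
Qed.

Lemma bminP V : V != set0 -> exists2 y, y \in V & bmin V = y.
Proof.
case/set0Pn => x xV.
have: (bmin V == n) || [exists y in V, bmin V == val y].
  rewrite /bmin; apply: (big_ind (fun m => (m == n) || [exists y in V, m == val y])).
  - by rewrite eqxx.
  - by move=> m1 m2 H1 H2; rewrite /minn; case: ifP.
  - by move=> y yV; apply/orP; right; apply/existsP; exists y; rewrite yV eqxx.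
case/orP => [/eqP e|/existsP[y /andP[yV /eqP e]]]; last by exists y.
by have := bmin_le xV; rewrite e leqNgt ltn_ord.
Qed.

Lemma le_bmax V (i : 'I_n) : i \in V -> i <= bmax V.
Proof. by move=> iV; rewrite /bmax (bigD1 i) //= leq_maxl. Qed.

Lemma bmaxP V : V != set0 -> exists2 y, y \in V & bmax V = y.
Proof.
case/set0Pn => x xV.
have: (bmax V == 0) || [exists y in V, bmax V == val y].
  rewrite /bmax; apply: (big_ind (fun m => (m == 0) || [exists y in V, m == val y])).
  - by rewrite eqxx.
  - by move=> m1 m2 H1 H2; rewrite /maxn; case: ifP.
  - by move=> y yV; apply/orP; right; apply/existsP; exists y; rewrite yV eqxx.
case/orP => [/eqP e|/existsP[y /andP[yV /eqP e]]]; last by exists y.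
exists x => //; apply/eqP; rewrite eqn_leq le_bmax // e; done.
Qed.

Lemma bmin_eq V (y : 'I_n) : y \in V -> (forall i, i \in V -> y <= i) -> bmin V = y.
Proof.
move=> yV H; have [|z zV ez] := bminP (V:=V); first by apply/set0Pn; exists y.
by apply/eqP; rewrite eqn_leq bmin_le // ez H.
Qed.

Lemma bmax_eq V (y : 'I_n) : y \in V -> (forall i, i \in V -> i <= y) -> bmax V = y.
Proof.
move=> yV H; have [|z zV ez] := bmaxP (V:=V); first by apply/set0Pn; exists y.
by apply/eqP; rewrite eqn_leq le_bmax // ez H.
Qed.

Lemma bmin_le_bmax V : V != set0 -> bmin V <= bmax V.
Proof. by case/set0Pn=> x xV; rewrite (leq_trans (bmin_le xV)) // le_bmax. Qed.

Lemma nestedE W V : W != set0 ->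
  nested W V = (V != W) && ((bmin V <= bmin W) && (bmax W <= bmax V)).
Proof.
move=> W0; rewrite /nested; congr (_ && _).
have [x xW ex] := bminP W0; have [y yW ey] := bmaxP W0.
apply/forallP/andP => [H|[h1 h2] w].
  split; [rewrite ex; have := H x | rewrite ey; have := H y];
   by rewrite ?xW ?yW => /andP[].
apply/implyP => wW; rewrite (leq_trans h1 (bmin_le wW)) /=.
exact: leq_trans (le_bmax wW) h2.
Qed.


Lemma blk_eq (P : {set {set 'I_n}}) U V (x : 'I_n) :
  trivIset P -> U \in P -> V \in P -> x \in U -> x \in V -> U = V.
Proof.
by move=> tP UP VP xU xV; rewrite -(def_pblock tP UP xU) (def_pblock tP VP xV).
Qed.

Lemma blk_val (P : {set {set 'I_n}}) U V (x y : 'I_n) :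
  trivIset P -> U \in P -> V \in P -> U != V -> x \in U -> y \in V -> (x : nat) != y.
Proof.
move=> tP UP VP UV xU yV; apply/negP => /eqP exy; have {}exy := val_inj exy; subst y.
by move/eqP: UV; apply; apply: (blk_eq tP UP VP xU yV).
Qed.

Lemma nc_cross (P : {set {set 'I_n}}) U V (a b c d : 'I_n) :
  noncrossing P -> U \in P -> V \in P -> U != V ->
  a < b -> b < c -> c < d -> a \in U -> c \in U -> b \in V -> d \in V -> False.
Proof.
move=> nP UP VP UV.
move: nP => /forallP/(_ U)/implyP/(_ UP)/forallP/(_ V)/implyP/(_ VP)/implyP H.
move=> ab bc cd aU cU bV dV; move/negP: (H UV); apply.
by apply/existsP; exists a; apply/existsP; exists b; apply/existsP; exists c;
  apply/existsP; exists d; rewrite ab bc cd aU cU bV dV.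
Qed.

Lemma lam (P : {set {set 'I_n}}) U V :
  noncrossing P -> trivIset P -> U \in P -> V \in P -> U != V ->
  U != set0 -> V != set0 ->
  [|| bmax U < bmin V, bmax V < bmin U, nested U V | nested V U].
Proof.
move=> nP tP.
wlog h: U V / bmin U < bmin V.
  move=> H UP VP UV U0 V0.
  have [x xU ex] := bminP U0; have [y yV ey] := bminP V0.
  have := blk_val tP UP VP UV xU yV; rewrite -ex -ey.
  case: (ltngtP (bmin U) (bmin V)) => // hh _; first exact: (H U V hh UP VP UV U0 V0).
  rewrite eq_sym in UV.
  by case/or4P: (H V U hh VP UP UV V0 U0) => ->; rewrite ?orbT.
move=> UP VP UV U0 V0.
have [xu xuU exu] := bminP U0; have [yu yuU eyu] := bmaxP U0.
have [xv xvV exv] := bminP V0; have [yv yvV eyv] := bmaxP V0.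
case: (ltnP (bmax U) (bmin V)) => [h0|h1]; first by apply/or4P; constructor 1.
have h1' : bmin V < bmax U.
  by rewrite ltn_neqAle h1 andbT exv eyu (blk_val tP VP UP _ xvV yuU) // eq_sym.
case: (ltnP (bmax V) (bmax U)) => [h2|h2].
  by rewrite (nestedE _ V0) UV (ltnW h) (ltnW h2) !orbT.
have h2' : bmax U < bmax V.
  by rewrite ltn_neqAle h2 andbT eyv eyu (blk_val tP UP VP UV yuU yvV).
exfalso; apply: (nc_cross nP UP VP UV (a:=xu) (b:=xv) (c:=yu) (d:=yv));
  by rewrite -?exu -?exv -?eyu -?eyv.
Qed.


Definition hull V := [set i : 'I_n | bmin V <= i <= bmax V].

Lemma in_hull V (i : 'I_n) : (i \in hull V) = (bmin V <= i <= bmax V).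
Proof. by rewrite inE. Qed.

Lemma hull_sub V : V \subset hull V.
Proof. by apply/subsetP => i iV; rewrite in_hull bmin_le ?le_bmax. Qed.

Lemma bmin_hull V : V != set0 -> bmin (hull V) = bmin V.
Proof.
move=> V0; have [x xV ex] := bminP V0; rewrite ex; apply: bmin_eq.
  by rewrite (subsetP (hull_sub V)).
by move=> i; rewrite in_hull -ex => /andP[].
Qed.

Lemma bmax_hull V : V != set0 -> bmax (hull V) = bmax V.
Proof.
move=> V0; have [x xV ex] := bmaxP V0; rewrite ex; apply: bmax_eq.
  by rewrite (subsetP (hull_sub V)).
by move=> i; rewrite in_hull -ex => /andP[].
Qed.

Lemma hull_neq0 V : V != set0 -> hull V != set0.
Proof. by case/set0Pn => x xV; apply/set0Pn; exists x; rewrite (subsetP (hull_sub V)). Qed.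

Lemma outerP (P : {set {set 'I_n}}) V :
  reflect (V \in P /\ forall W, W \in P -> ~~ nested V W) (V \in outer_blocks P).
Proof.
rewrite inE; apply: (iffP andP) => [[VP /forallP H]|[VP H]]; split => //.
  by move=> W WP; have := H W; rewrite WP.
by apply/forallP => W; apply/implyP; apply: H.
Qed.

Lemma innerE (P : {set {set 'I_n}}) : inner_blocks P = P :\: outer_blocks P.
Proof.
apply/setP => V; rewrite !inE; case: (V \in P) => //=; rewrite andbT.
by rewrite negb_forall; apply: eq_existsb => W; rewrite negb_imply negbK.
Qed.

Definition iclos (P : {set {set 'I_n}}) := [set hull V | V in outer_blocks P].


Lemma partP (P : {set {set 'I_n}}) : is_part P ->
  [/\ trivIset P, forall V, V \in P -> V != set0 &
      forall x : 'I_n, pblock P x \in P /\ x \in pblock P x].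
Proof.
case/and3P => /eqP cP tP s0; split => //.
  by move=> V VP; apply: contraNneq s0 => <-.
by move=> x; rewrite pblock_mem ?mem_pblock cP ?inE.
Qed.

Lemma ex_outer (P : {set {set 'I_n}}) (x : 'I_n) : is_NC P ->
  exists2 V, V \in outer_blocks P & x \in hull V.
Proof.
case/andP => pP nP; have [tP P0 bP] := partP pP.
pose S := [pred B | (B \in P) && (x \in hull B)].
have S0 : S (pblock P x).
  by case: (bP x) => h1 h2; rewrite /S /= h1 (subsetP (hull_sub _)).
have [B /andP[BP xB] Bmin] := arg_minnP (fun B => bmin B) S0.
exists B => //; apply/outerP; split => // W WP; apply/negP => nBW.
have B0 := P0 _ BP; have W0 := P0 _ WP.
move: (nBW); rewrite (nestedE _ B0) => /and3P[WB h1 h2].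
have SW : S W.
  by rewrite /S /= WP in_hull; move: xB; rewrite in_hull => /andP[] *; lia.
have h3 := Bmin W SW.
have [u uB eu] := bminP B0; have [w wW ew] := bminP W0.
have BW : B != W by rewrite eq_sym.
move/negP: (blk_val tP BP WP BW uB wW); apply.
by rewrite -eu -ew eqn_leq h1 h3.
Qed.


Lemma nested_sub W V : nested W V -> W \subset hull V.
Proof.
by case/andP => _ /forallP H; apply/subsetP => i iW; have := H i; rewrite iW in_hull.
Qed.

Lemma sub_hull_outer (P : {set {set 'I_n}}) B : is_NC P -> B \in P ->
  exists2 V, V \in outer_blocks P & B \subset hull V.
Proof.
move=> ncP BP; have /andP[pP nP] := ncP; have [tP P0 bP] := partP pP.
have B0 := P0 _ BP; have [x xB] := set0Pn _ B0.
have [V VO xV] := ex_outer x ncP; exists V => //.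
case/outerP: VO => VP Vn.
have [<-|BV] := eqVneq B V; first exact: hull_sub.
have xlo := bmin_le xB; have xhi := le_bmax xB; move: xV; rewrite in_hull => /andP[h1 h2].
case/or4P: (lam nP tP BP VP BV B0 (P0 _ VP)) => [h|h|h|h].
- by exfalso; lia.
- by exfalso; lia.
- exact: nested_sub.
- by have := Vn _ BP; rewrite h.
Qed.

Lemma disjP (A B : {set 'I_n}) :
  (forall i, i \in A -> i \in B -> False) -> [disjoint A & B].
Proof.
move=> H; rewrite -setI_eq0; apply/eqP/setP => i; rewrite !inE.
by apply/negP => /andP[]; apply: H.
Qed.

Lemma iclos_ok (P : {set {set 'I_n}}) : is_NC P ->
  is_interval_part (iclos P) && irr_refines P (iclos P).
Proof.
move=> ncP; have /andP[pP nP] := ncP; have [tP P0 bP] := partP pP.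
have OP V : V \in outer_blocks P -> V \in P by case/outerP.
apply/andP; split; first (apply/andP; split).
- apply/and3P; split.
  + apply/eqP/setP => x; rewrite inE; have [V VO xV] := ex_outer x ncP.
    by apply/bigcupP; exists (hull V) => //; apply: imset_f.
  + apply/trivIsetP => X Y /imsetP[V VO ->] /imsetP[W WO ->] XY.
    have VW : V != W by apply: contraNneq XY => ->.
    have V0 := P0 _ (OP _ VO); have W0 := P0 _ (OP _ WO).
    case/outerP: VO => VP Vn; case/outerP: WO => WP Wn.
    case/or4P: (lam nP tP VP WP VW V0 W0) => [h|h|h|h].
    * by apply/disjP => i; rewrite !in_hull => /andP[h1 h2] /andP[h3 h4]; lia.
    * by apply/disjP => i; rewrite !in_hull => /andP[h1 h2] /andP[h3 h4]; lia.
    * by have := Vn _ WP; rewrite h.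
    * by have := Wn _ VP; rewrite h.
  + apply/imsetP => [][V VO] /esym/eqP; apply/negP.
    by apply: hull_neq0; apply: P0; apply: OP.
- apply/forallP => X; apply/implyP => /imsetP[V VO ->].
  apply/forallP => i; apply/forallP => j; apply/forallP => k; apply/implyP.
  by rewrite !in_hull => /and4P[h1 h2 /andP[h3 h4] /andP[h5 h6]]; lia.
- apply/andP; split.
  + apply/forallP => B; apply/implyP => BP.
    have [V VO BV] := sub_hull_outer ncP BP.
    by apply/existsP; exists (hull V); rewrite BV andbT; apply: imset_f.
  + apply/forallP => X; apply/implyP => /imsetP[V VO ->].
    have V0 := P0 _ (OP _ VO).
    apply/existsP; exists V; rewrite (OP _ VO) /=; apply/forallP => i; apply/implyP => _.
    rewrite bmin_hull // bmax_hull //; apply/implyP => /orP[] /eqP ei.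
    * have [u uV eu] := bminP V0; suff -> : i = u by [].
      by apply: val_inj; rewrite /= ei eu.
    * have [u uV eu] := bmaxP V0; suff -> : i = u by [].
      by apply: val_inj; rewrite /= ei eu.
Qed.


Lemma irr_blk (P I : {set {set 'I_n}}) X : is_part P -> is_part I ->
  irr_refines P I -> X \in I ->
  exists2 E, E \in P & [/\ E \subset X, bmin E = bmin X & bmax E = bmax X].
Proof.
move=> pP pI /andP[/forallP rPI /forallP ePI] XI.
have [tP P0 bP] := partP pP; have [tI I0 bI] := partP pI.
have /implyP/(_ XI)/existsP[E /andP[EP /forallP HE]] := ePI X.
have X0 := I0 _ XI; have [u uX eu] := bminP X0; have [w wX ew] := bmaxP X0.
have uE : u \in E by have := HE u; rewrite uX eu eqxx.
have wE : w \in E by have := HE w; rewrite wX ew eqxx orbT.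
have EX : E \subset X.
  have /implyP/(_ EP)/existsP[Y /andP[YI EY]] := rPI E.
  by rewrite (blk_eq tI XI YI uX (subsetP EY _ uE)).
exists E => //; split => //.
  by rewrite eu; apply: bmin_eq => // i /(subsetP EX) /bmin_le; rewrite eu.
by rewrite ew; apply: bmax_eq => // i /(subsetP EX) /le_bmax; rewrite ew.
Qed.

Lemma ip_hull (I : {set {set 'I_n}}) X : is_interval_part I -> X \in I -> hull X = X.
Proof.
case/andP => pI /forallP iI XI; have [tI I0 bI] := partP pI.
have X0 := I0 _ XI; have [u uX eu] := bminP X0; have [w wX ew] := bmaxP X0.
apply/eqP; rewrite eqEsubset hull_sub andbT; apply/subsetP => i.
rewrite in_hull eu ew => /andP[h1 h2].
have [e1|n1] := eqVneq (i : nat) u; first by rewrite (val_inj e1).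
have [e2|n2] := eqVneq (i : nat) w; first by rewrite (val_inj e2).
have /implyP/(_ XI)/forallP/(_ u)/forallP/(_ i)/forallP/(_ w)/implyP := iI X.
apply; rewrite uX wX !andbT; apply/andP; split; lia.
Qed.

Lemma hull_nested W V : W \subset hull V -> V != W -> nested W V.
Proof.
move=> WV VW; apply/andP; split => //; apply/forallP => w; apply/implyP => wW.
by rewrite -in_hull (subsetP WV).
Qed.

Lemma iclos_uniq (P I : {set {set 'I_n}}) : is_NC P -> is_interval_part I ->
  irr_refines P I -> I = iclos P.
Proof.
move=> ncP ipI rPI; have /andP[pP nP] := ncP; have [tP P0 bP] := partP pP.
have /andP[pI _] := ipI; have [tI I0 bI] := partP pI.
have /andP[/forallP rf _] := rPI.
have key X : X \in I -> exists2 E, E \in outer_blocks P & hull E = X.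
  move=> XI; have [E EP [EX e1 e2]] := irr_blk pP pI rPI XI.
  have hE : hull E = X by rewrite /hull e1 e2 -/(hull X) (ip_hull ipI XI).
  exists E => //; apply/outerP; split => // B BP; apply/negP => nEB.
  have E0 := P0 _ EP; have B0 := P0 _ BP.
  move: (nEB); rewrite (nestedE _ E0) => /and3P[BE h1 h2].
  have /implyP/(_ BP)/existsP[Y /andP[YI BY]] := rf B.
  have [b bB eb] := bminP B0; have [c cB ec] := bmaxP B0.
  have [u uE eu] := bminP E0.
  have uX := subsetP EX _ uE.
  have uY : u \in Y.
    rewrite -(ip_hull ipI YI) in_hull; apply/andP; split.
      by apply: leq_trans (bmin_le (subsetP BY _ bB)) _; rewrite -eb -eu.
    apply: leq_trans _ (le_bmax (subsetP BY _ cB)); rewrite -ec -eu.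
    exact: leq_trans (bmin_le_bmax E0) h2.
  have XY := blk_eq tI XI YI uX uY; subst Y.
  have bE : b \in hull E by rewrite hE (subsetP BY).
  move: bE; rewrite in_hull -eb => /andP[h3 _].
  have ebu : b = u by apply: val_inj; rewrite /= -eb -eu; apply/eqP; rewrite eqn_leq h1 h3.
  subst b; move: BE; rewrite (blk_eq tP BP EP bB uE) eqxx; done.
apply/setP => X; apply/idP/idP => [XI|/imsetP[V VO ->]].
  by have [E EO <-] := key X XI; apply: imset_f.
have /outerP[VP Vn] := VO.
have /implyP/(_ VP)/existsP[Y /andP[YI VY]] := rf V.
have [E EO hE] := key Y YI.
have [<-|VE] := eqVneq E V; first by rewrite hE.
by have := Vn _ (proj1 (outerP _ _ EO)); rewrite hull_nested // hE.
Qed.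


Definition res (P : {set {set 'I_n}}) W := [set V in P | V \subset W].

Definition irrD (D : {set 'I_n}) (S : {set {set 'I_n}}) :=
  [&& partition S D, noncrossing S &
      [exists V in S, forall i in D,
         ((val i == bmin D) || (val i == bmax D)) ==> (i \in V)]].

Lemma ncS (P Q : {set {set 'I_n}}) : Q \subset P -> noncrossing P -> noncrossing Q.
Proof.
move=> /subsetP QP /forallP nP; apply/forallP => V; apply/implyP => VQ.
have /implyP/(_ (QP _ VQ))/forallP nV := nP V.
apply/forallP => W; apply/implyP => WQ; exact: (implyP (nV W) (QP _ WQ)).
Qed.

Lemma res_irr (P I : {set {set 'I_n}}) W : is_NC P -> is_NC I ->
  irr_refines P I -> W \in I -> irrD W (res P W).
Proof.
move=> /andP[pP nP] /andP[pI nI] /andP[/forallP rPI /forallP ePI] WI.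
have [tP P0 bP] := partP pP; have [tI I0 bI] := partP pI.
have subW V : V \in P -> V != set0 -> exists2 Y, Y \in I & V \subset Y.
  by move=> VP _; have /implyP/(_ VP)/existsP[Y /andP[YI VY]] := rPI V; exists Y.
apply/and3P; split.
- apply/and3P; split.
  + apply/eqP/setP => x; apply/bigcupP/idP => [[V]|xW].
      by rewrite inE => /andP[_ /subsetP VW] /VW.
    case: (bP x) => h1 h2; exists (pblock P x) => //; rewrite inE h1 /=.
    have [Y YI sY] := subW _ h1 (P0 _ h1).
    by rewrite (blk_eq tI WI YI xW (subsetP sY _ h2)).
  + by apply: trivIsetS tP; apply/subsetP => V; rewrite inE => /andP[].
  + by rewrite inE negb_and; apply/orP; left; apply/negP => /P0; rewrite eqxx.
- by apply: ncS nP; apply/subsetP => V; rewrite inE => /andP[].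
have /implyP/(_ WI)/existsP[V /andP[VP HV]] := ePI W.
apply/existsP; exists V; rewrite HV andbT inE VP /=.
have [u uW eu] := bminP (I0 _ WI).
have uV : u \in V by have := forallP HV u; rewrite uW eu eqxx.
have [Y YI sY] := subW _ VP (P0 _ VP).
by rewrite (blk_eq tI WI YI uW (subsetP sY _ uV)).
Qed.


Lemma sub_bminmax B W : B != set0 -> B \subset W ->
  (bmin W <= bmin B) && (bmax B <= bmax W).
Proof.
move=> B0 /subsetP BW; have [b bB eb] := bminP B0; have [c cB ec] := bmaxP B0.
by rewrite eb ec bmin_le ?le_bmax ?BW.
Qed.

Lemma res_outer (P I : {set {set 'I_n}}) W V : is_NC P -> is_NC I ->
  irr_refines P I -> W \in I -> V \in res P W ->
  (V \in outer_blocks P) = (W \in outer_blocks I) && (V \in outer_blocks (res P W)).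
Proof.
move=> ncP ncI rPI WI; have /andP[pP nP] := ncP; have /andP[pI nI] := ncI.
have [tP P0 bP] := partP pP; have [tI I0 bI] := partP pI.
have /andP[/forallP rf _] := rPI.
have [E EP [EW e1 e2]] := irr_blk pP pI rPI WI.
have hE : hull E = hull W by rewrite /hull e1 e2.
have ER : E \in res P W by rewrite inE EP EW.
have E0 := P0 _ EP; have W0 := I0 _ WI.
have noB B : B \in P -> B \subset W -> ~~ nested E B.
  move=> BP BW; apply/negP => nEB; have B0 := P0 _ BP.
  move: (nEB); rewrite (nestedE _ E0) => /and3P[BE h1 h2].
  have /andP[h3 _] := sub_bminmax B0 BW.
  have [b bB eb] := bminP B0; have [u uE eu] := bminP E0.
  have ebu : b = u by apply: val_inj; rewrite /= -eb -eu; apply/eqP; rewrite eqn_leq h1 e1 h3.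
  by subst b; move: BE; rewrite (blk_eq tP BP EP bB uE) eqxx.
rewrite inE => /andP[VP VW].
have [VE|VE] := eqVneq V E; last first.
  have nVE : nested V E.
    apply: hull_nested; last by rewrite eq_sym.
    by rewrite hE; exact: subset_trans VW (hull_sub W).
  apply/idP/idP => [/outerP[_ H]|/andP[_ /outerP[_ H]]].
    by have := H _ EP; rewrite nVE.
  by have := H _ ER; rewrite nVE.
subst V.
have -> : E \in outer_blocks (res P W).
  by apply/outerP; split => // B; rewrite inE => /andP[BP BW]; apply: noB.
rewrite andbT; apply/idP/idP => [/outerP[_ H]|/outerP[_ H]].
  apply/outerP; split => // W' W'I; apply/negP => nWW.
  have [E' E'P [E'W f1 f2]] := irr_blk pP pI rPI W'I.
  have hE' : hull E' = hull W' by rewrite /hull f1 f2.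
  have E'E : E' != E.
    apply/negP => /eqP ee; subst E'.
    have [u uE _] := bminP E0.
    have := blk_eq tI WI W'I (subsetP EW _ uE) (subsetP E'W _ uE).
    by move: nWW => /andP[/eqP ne _] /esym.
  have := H _ E'P; rewrite hull_nested //.
  by rewrite hE'; apply: subset_trans EW (nested_sub nWW).
apply/outerP; split => // B BP; apply/negP => nEB.
have /implyP/(_ BP)/existsP[W' /andP[W'I BW']] := rf B.
have [eW|nW] := eqVneq W' W; first by subst W'; move/negP: (noB _ BP BW').
have := H _ W'I; rewrite hull_nested // ?(eq_sym W') //.
apply/subsetP => w wW; rewrite in_hull.
have /andP[h3 h4] := sub_bminmax (P0 _ BP) BW'.
move: (nEB); rewrite (nestedE _ E0) => /and3P[_ h1 h2].
have := bmin_le wW; have := le_bmax wW; rewrite -e1 -e2 => h5 h6.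
by rewrite (leq_trans h3 (leq_trans h1 h6)) (leq_trans h5 (leq_trans h2 h4)).
Qed.


Lemma irrD_facts D S : irrD D S ->
  [/\ forall V, V \in S -> V \subset D, forall V, V \in S -> V != set0,
      trivIset S & noncrossing S].
Proof.
case/and3P => /and3P[/eqP cS tS s0] nS _; split => // V VS.
  by rewrite -cS; apply: bigcup_sup.
by apply: contraNneq s0 => <-.
Qed.

Lemma glue_ok (I : {set {set 'I_n}}) (f : {set 'I_n} -> {set {set 'I_n}}) :
  is_NC I -> (forall W, W \in I -> irrD W (f W)) ->
  [/\ is_NC (\bigcup_(W in I) f W), irr_refines (\bigcup_(W in I) f W) I &
      forall W, W \in I -> res (\bigcup_(W in I) f W) W = f W].
Proof.
move=> /andP[pI nI] fI; have [tI I0 bI] := partP pI.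
set P := \bigcup_(W in I) f W.
have memP V : reflect (exists2 W, W \in I & V \in f W) (V \in P) by apply: bigcupP.
have fsub W V : W \in I -> V \in f W -> V \subset W.
  by move=> WI; case: (irrD_facts (fI _ WI)) => h _ _ _; apply: h.
have f0 W V : W \in I -> V \in f W -> V != set0.
  by move=> WI; case: (irrD_facts (fI _ WI)) => _ h _ _; apply: h.
have uW W1 W2 V : W1 \in I -> W2 \in I -> V \in f W1 -> V \subset W2 -> W1 = W2.
  move=> W1I W2I VW1 VW2; have [x xV] := set0Pn _ (f0 _ _ W1I VW1).
  exact: blk_eq tI W1I W2I (subsetP (fsub _ _ W1I VW1) _ xV) (subsetP VW2 _ xV).
have resP W : W \in I -> res P W = f W.
  move=> WI; apply/setP => V; rewrite inE; apply/andP/idP => [[/memP[W' W'I VW'] VW]|VW].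
    by rewrite -(uW _ _ _ W'I WI VW' VW).
  by split; [apply/memP; exists W | apply: fsub VW].
have pP : is_part P.
  apply/and3P; split.
  - apply/eqP/setP => x; rewrite inE; case: (bI x) => h1 h2.
    case/and3P: (fI _ h1) => /and3P[/eqP cS _ _] _ _.
    move: h2; rewrite -{1}cS => /bigcupP[V VS xV].
    by apply/bigcupP; exists V => //; apply/memP; exists (pblock I x).
  - apply/trivIsetP => V1 V2 /memP[W1 W1I V1W] /memP[W2 W2I V2W] ne.
    have [e|ne'] := eqVneq W1 W2.
      subst W2; case: (irrD_facts (fI _ W1I)) => _ _ /trivIsetP tS _; exact: tS.
    apply: disjP => i iV1 iV2; move/eqP: ne'; apply.
    exact: blk_eq tI W1I W2I (subsetP (fsub _ _ W1I V1W) _ iV1) (subsetP (fsub _ _ W2I V2W) _ iV2).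
  - by apply/memP => [][W WI /(f0 _ _ WI)]; rewrite eqxx.
split; last exact: resP.
- rewrite /is_NC pP /=; apply/forallP => V1; apply/implyP => /memP[W1 W1I V1W].
  apply/forallP => V2; apply/implyP => /memP[W2 W2I V2W]; apply/implyP => ne.
  apply/negP => /existsP[a /existsP[b /existsP[c /existsP[d]]]].
  case/and5P => ab bc cd aV /and3P[cV bV dV].
  have [e|ne'] := eqVneq W1 W2.
    subst W2; case: (irrD_facts (fI _ W1I)) => _ _ _ nS.
    exact: nc_cross nS V1W V2W ne ab bc cd aV cV bV dV.
  have s1 := subsetP (fsub _ _ W1I V1W); have s2 := subsetP (fsub _ _ W2I V2W).
  exact: nc_cross nI W1I W2I ne' ab bc cd (s1 _ aV) (s1 _ cV) (s2 _ bV) (s2 _ dV).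
- apply/andP; split.
  + apply/forallP => V; apply/implyP => /memP[W WI VW].
    by apply/existsP; exists W; rewrite WI (fsub _ _ WI VW).
  + apply/forallP => W; apply/implyP => WI.
    case/and3P: (fI _ WI) => _ _ /existsP[V /andP[VW H]].
    by apply/existsP; exists V; rewrite H andbT; apply/memP; exists W.
Qed.

Lemma res_cover (P I : {set {set 'I_n}}) : refines P I ->
  \bigcup_(W in I) res P W = P.
Proof.
move=> /forallP rPI; apply/setP => V; apply/bigcupP/idP => [[W _]|VP].
  by rewrite inE => /andP[].
have /implyP/(_ VP)/existsP[W /andP[WI VW]] := rPI V.
by exists W => //; rewrite inE VP.
Qed.

End Hull.


Section Alg.
Local Open Scope ring_scope.
Variable R : comPzRingType.
Variable M : Type.

Definition Fo (rc rp : seq M -> R) n (a : 'I_n -> M) (P : {set {set 'I_n}}) :=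
  (\prod_(V in outer_blocks P) restr rc a V) * (\prod_(W in inner_blocks P) restr rp a W).

Definition G (rc rp : seq M -> R) n (a : 'I_n -> M) (D : {set 'I_n}) :=
  \sum_(S | irrD D S) Fo rc rp a S.

Lemma FoE rc rp n (a : 'I_n -> M) P :
  Fo rc rp a P = \prod_(V in P)
     (if V \in outer_blocks P then restr rc a V else restr rp a V).
Proof.
rewrite /Fo; symmetry; rewrite (bigID (mem (outer_blocks P))) /= innerE; congr (_ * _).
  apply: eq_big => [V|V /andP[_ ->]] //.
  by apply/andP/idP => [[]//|h]; split => //; case/outerP: h.
apply: eq_big => [V|V /andP[_ /negbTE ->]] //.
by rewrite in_setD andbC.
Qed.

Lemma Fo_split rc rp n (a : 'I_n -> M) (P I : {set {set 'I_n}}) :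
  is_NC P -> is_NC I -> irr_refines P I ->
  Fo rc rp a P = \prod_(W in I)
    (if W \in outer_blocks I then Fo rc rp a (res P W) else Fo rp rp a (res P W)).
Proof.
move=> ncP ncI rPI; have /andP[pP _] := ncP; have [tP P0 bP] := partP pP.
have /andP[pI _] := ncI; have [tI I0 bI] := partP pI.
have /andP[/forallP rf _] := rPI.
set g := fun V => if V \in outer_blocks P then restr rc a V else restr rp a V.
transitivity (\prod_(W in I) \prod_(V | (V \in P) && (V \subset W)) g V); last first.
  apply: eq_bigr => W WI.
  have H V : (V \in P) && (V \subset W) -> V \in res P W by rewrite inE.
  case: ifP => Wo; rewrite FoE; (apply: eq_big => [V|V /H VR]; first by rewrite inE).
    by rewrite /g (res_outer ncP ncI rPI WI VR) Wo.
  by rewrite /g (res_outer ncP ncI rPI WI VR) Wo; case: ifP.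
rewrite FoE (exchange_big_dep (mem P)) /=; last by move=> W V _ /andP[].
apply: eq_bigr => V VP.
have /implyP/(_ VP)/existsP[W0 /andP[W0I VW0]] := rf V.
rewrite (big_pred1 W0) // => W /=; apply/andP/eqP => [[WI /andP[_ VW]]|->].
  have [x xV] := set0Pn _ (P0 _ VP).
  exact: blk_eq tI WI W0I (subsetP VW _ xV) (subsetP VW0 _ xV).
by rewrite W0I VP VW0.
Qed.


Lemma L_main rc rp n (a : 'I_n -> M) (I : {set {set 'I_n}}) : is_NC I ->
  \sum_(P : {set {set 'I_n}} | is_NC P && irr_refines P I) Fo rc rp a P =
  \prod_(W in I) (if W \in outer_blocks I then G rc rp a W else G rp rp a W).
Proof.
move=> ncI; have /andP[pI _] := ncI; have [tI I0 bI] := partP pI.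
pose H W S := if W \in outer_blocks I then Fo rc rp a S else Fo rp rp a S.
transitivity (\prod_(W in I) \sum_(S | irrD W S) H W S); last first.
  by apply: eq_bigr => W _; rewrite /H /G; case: ifP.
rewrite (big_distr_big_dep set0) /=.
pose Phi (f : {ffun {set 'I_n} -> {set {set 'I_n}}}) := \bigcup_(W in I) f W.
pose Psi (P : {set {set 'I_n}}) := [ffun W => if W \in I then res P W else set0].
rewrite (reindex_onto Phi Psi); last first.
  move=> P /andP[ncP /andP[rf _]]; rewrite /Phi -{2}(res_cover rf).
  by apply: eq_bigr => W WI; rewrite ffunE WI.
apply: eq_big => [f|f].
  apply/idP/idP.
    case/andP=> /andP[ncP rPI] /eqP ef.
    apply/familyP => W; rewrite -ef ffunE /=.
    by case: ifP => WI //=; rewrite ?inE //; apply: (res_irr ncP ncI rPI WI).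
  move/familyP => fam.
  have fI W : W \in I -> irrD W (f W) by move=> WI; have := fam W; rewrite /= WI.
  have [ncP rPI resP] := glue_ok ncI fI.
  rewrite /Phi ncP rPI /=; apply/eqP/ffunP => W; rewrite ffunE.
  case: ifP => WI; first exact: resP.
  by have := fam W; rewrite /= WI inE => /eqP.
case/andP=> /andP[ncP rPI] /eqP ef.
have resP W : W \in I -> res (Phi f) W = f W by move=> WI; rewrite -{2}ef ffunE WI.
rewrite (Fo_split _ _ _ ncP ncI rPI); apply: eq_bigr => W WI.
by rewrite /H resP.
Qed.

End Alg.


Lemma ncP n (P : {set {set 'I_n}}) :
  reflect (forall U V (a b c d : 'I_n), U \in P -> V \in P -> U != V ->
             a < b -> b < c -> c < d -> a \in U -> c \in U -> b \in V -> d \in V -> False)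
          (noncrossing P).
Proof.
apply: (iffP idP) => [nP U V a b c d UP VP UV|H]; first exact: (nc_cross nP UP VP UV).
apply/forallP => U; apply/implyP => UP; apply/forallP => V; apply/implyP => VP.
apply/implyP => UV; apply/negP => /existsP[a /existsP[b /existsP[c /existsP[d]]]].
case/and5P => ab bc cd aU /and3P[cU bV dV]; exact: (H U V a b c d).
Qed.

Section Tr.
Variables m n : nat.
Variable h : 'I_m -> 'I_n.
Hypothesis hmono : forall x y : 'I_m, (h x < h y) = (x < y).

Lemma hle (x y : 'I_m) : (h x <= h y) = (x <= y).
Proof. by rewrite leqNgt hmono -leqNgt. Qed.

Lemma hinj : injective h.
Proof.
move=> x y e; apply: val_inj; apply/eqP; by rewrite eqn_leq -hle -(hle y) e leqnn.

Qed.

Definition himg (S : {set {set 'I_m}}) : {set {set 'I_n}} := [set h @: (V : {set _}) | V in S].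
Definition hpre (T : {set {set 'I_n}}) : {set {set 'I_m}} := [set h @^-1: (V : {set _}) | V in T].

Lemma imhK (V : {set 'I_m}) : h @^-1: (h @: V) = V.
Proof.
apply/setP => x; rewrite inE; apply/imsetP/idP => [[y yV /hinj ->]//|xV].
by exists x.
Qed.

Lemma preK (V : {set 'I_n}) : V \subset h @: setT -> h @: (h @^-1: V) = V.
Proof.
move=> /subsetP VT; apply/setP => x; apply/imsetP/idP => [[y]|xV].
  by rewrite inE => yV ->.
by have /imsetP[y _ ex] := VT _ xV; exists y => //; rewrite inE -ex.
Qed.

Lemma himgK (S : {set {set 'I_m}}) : hpre (himg S) = S.
Proof.
rewrite /hpre /himg -imset_comp; rewrite -[RHS]imset_id; apply: eq_imset => V /=.
exact: imhK.
Qed.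

Lemma hinj2 : injective (fun V : {set 'I_m} => h @: V).
Proof. exact: imset_inj hinj. Qed.

Lemma bmin_im (V : {set 'I_m}) (u : 'I_m) : u \in V -> bmin V = u -> bmin (h @: V) = h u.
Proof.
move=> uV eu; apply: bmin_eq; first exact: imset_f.
by move=> _ /imsetP[v vV ->]; rewrite hle -eu bmin_le.
Qed.

Lemma bmax_im (V : {set 'I_m}) (u : 'I_m) : u \in V -> bmax V = u -> bmax (h @: V) = h u.
Proof.
move=> uV eu; apply: bmax_eq; first exact: imset_f.
by move=> _ /imsetP[v vV ->]; rewrite hle -eu le_bmax.
Qed.

Lemma nested_im (W V : {set 'I_m}) : W != set0 -> V != set0 ->
  nested (h @: W) (h @: V) = nested W V.
Proof.
move=> W0 V0; have W0' : h @: W != set0 by rewrite imset_eq0.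
rewrite !nestedE // (inj_eq hinj2).
have [u uW eu] := bminP W0; have [w wW ew] := bmaxP W0.
have [u' uV eu'] := bminP V0; have [w' wV ew'] := bmaxP V0.
by rewrite (bmin_im uW eu) (bmax_im wW ew) (bmin_im uV eu') (bmax_im wV ew') !hle eu ew eu' ew'.
Qed.

Lemma outer_im (S : {set {set 'I_m}}) : (forall V, V \in S -> V != set0) ->
  outer_blocks (himg S) = himg (outer_blocks S).
Proof.
move=> S0; apply/setP => X; apply/outerP/imsetP => [[/imsetP[V VS ->] H]|[V VO ->]].
  exists V => //; apply/outerP; split => // U US.
  by have := H _ (imset_f _ US); rewrite nested_im ?S0.
case/outerP: VO => VS H; split; first exact: imset_f.
by move=> _ /imsetP[U US ->]; rewrite nested_im ?S0 ?H.
Qed.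

Lemma inner_im (S : {set {set 'I_m}}) : (forall V, V \in S -> V != set0) ->
  inner_blocks (himg S) = himg (inner_blocks S).
Proof.
move=> S0; rewrite !innerE outer_im //; apply/setP => X; rewrite in_setD.
apply/andP/imsetP => [[nO /imsetP[V VS eX]]|[V]]; first subst X.
  exists V => //; rewrite in_setD VS andbT; apply: contra nO => VO; by apply/imsetP; exists V.
rewrite in_setD => /andP[nO VS] ->; split; last exact: imset_f.
by apply/imsetP => [][U UO /hinj2 e]; subst U; rewrite UO in nO.
Qed.

Lemma nc_im (S : {set {set 'I_m}}) : noncrossing (himg S) = noncrossing S.
Proof.
apply/ncP/ncP => H.
  move=> U V a b c d US VS UV ab bc cd aU cU bV dV.
  apply: (H (h @: U) (h @: V) (h a) (h b) (h c) (h d)); rewrite ?imset_f ?hmono //.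
  by rewrite (inj_eq hinj2).
move=> _ _ a b c d /imsetP[U US ->] /imsetP[V VS ->] UV ab bc cd.
move=> /imsetP[a' a'U ea] /imsetP[c' c'U ec] /imsetP[b' b'V eb] /imsetP[d' d'V ed].
subst a b c d; rewrite !hmono in ab bc cd.
apply: (H U V a' b' c' d') => //; apply: contraNneq UV => ->; done.
Qed.

Lemma restr_im (T R : Type) (r : seq T -> R) (a : 'I_n -> T) (V : {set 'I_m}) :
  restr r a (h @: V) = restr r (a \o h) V.
Proof.
rewrite /restr (map_comp a h); congr r; congr (map a _).
have srt (k : nat) (A : {set 'I_k}) : sorted (fun x y : 'I_k => x < y) (enum A).
  rewrite /enum_mem -enumT; apply: sorted_filter => [x y z|]; first exact: ltn_trans.
  by have := iota_ltn_sorted 0 k; rewrite -val_enum_ord sorted_map.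
apply: (@irr_sorted_eq _ (fun x y : 'I_n => x < y)).
- by move=> x y z; apply: ltn_trans.
- by move=> x; rewrite ltnn.
- exact: srt.
- by rewrite sorted_map; apply: sub_sorted (srt _ V) => x y; rewrite /= hmono.
move=> x; rewrite mem_enum; apply/imsetP/mapP => [[y yV ->]|[y]]; first by exists y; rewrite ?mem_enum.
by rewrite mem_enum => yV ->; exists y.
Qed.


Lemma bmin_imE (D : {set 'I_m}) (j : 'I_m) : D != set0 ->
  ((h j : nat) == bmin (h @: D)) = ((j : nat) == bmin D).
Proof.
move=> D0; have [u uD eu] := bminP D0; rewrite (bmin_im uD eu) eu.
by apply/eqP/eqP => [/val_inj/hinj ->|/val_inj ->].
Qed.

Lemma bmax_imE (D : {set 'I_m}) (j : 'I_m) : D != set0 ->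
  ((h j : nat) == bmax (h @: D)) = ((j : nat) == bmax D).
Proof.
move=> D0; have [u uD eu] := bmaxP D0; rewrite (bmax_im uD eu) eu.
by apply/eqP/eqP => [/val_inj/hinj ->|/val_inj ->].
Qed.

Lemma irrD_im (D : {set 'I_m}) S : D != set0 -> irrD (h @: D) (himg S) = irrD D S.
Proof.
move=> D0; rewrite /irrD (imset_partition _ _ hinj) nc_im; congr [&& _, _ & _].
apply/existsP/existsP => [[_ /andP[/imsetP[V VS ->] /forallP H]]|[V /andP[VS /forallP H]]].
  exists V; rewrite VS /=; apply/forallP => j; apply/implyP => jD.
  have := H (h j); rewrite imset_f // bmin_imE // bmax_imE //= => /implyP Hj.
  by apply/implyP => /Hj /imsetP[k kV /hinj ->].
exists (h @: V); rewrite imset_f //=; apply/forallP => x; apply/implyP.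
case/imsetP => j jD ex; subst x; rewrite bmin_imE // bmax_imE //.
by have := H j; rewrite jD /= => /implyP Hj; apply/implyP => /Hj jV; apply: imset_f.
Qed.

Lemma Fo_im (R : comPzRingType) (T : Type) (rc rp : seq T -> R) (a : 'I_n -> T) (S : {set {set 'I_m}}) :
  (forall V, V \in S -> V != set0) ->
  Fo rc rp a (himg S) = Fo rc rp (a \o h) S.
Proof.
move=> S0; rewrite /Fo outer_im // inner_im //.
have inj2 (A : {set {set 'I_m}}) : {in A &, injective (fun V : {set 'I_m} => h @: V)}.
  by move=> U V _ _; apply: hinj2.
rewrite /himg !big_imset //; congr (_ * _)%R; apply: eq_bigr => V _; exact: restr_im.
Qed.

Lemma G_im (R : comPzRingType) (T : Type) (rc rp : seq T -> R) (a : 'I_n -> T) :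
  0 < m -> G rc rp a (h @: setT) = G rc rp (a \o h) setT.
Proof.
move=> m0; have T0 : [set: 'I_m] != set0 by apply/set0Pn; exists (Ordinal m0).
rewrite /G (reindex_onto himg hpre); last first.
  move=> Tt /and3P[/and3P[/eqP cT _ _] _ _]; rewrite /himg /hpre -imset_comp.
  rewrite -[RHS]imset_id; apply: eq_in_imset => V VT /=; apply: preK.
  by rewrite -cT; apply: bigcup_sup.
apply: eq_big => [S|S /andP[hS _]].
  by rewrite himgK eqxx andbT irrD_im.
rewrite irrD_im // in hS; apply: Fo_im => V VS.
by case/and3P: hS => /and3P[_ _ s0] _ _; apply: contraNneq s0 => <-.
Qed.

End Tr.


Lemma ip_nc n (I : {set {set 'I_n}}) : is_interval_part I -> is_NC I.
Proof.
move=> ipI; have /andP[pI /forallP iI] := ipI; have [tI I0 bI] := partP pI.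
rewrite /is_NC pI /=; apply/ncP => U V a b c d UI VI UV ab bc cd aU cU bV dV.
have /implyP/(_ UI)/forallP/(_ a)/forallP/(_ b)/forallP/(_ c)/implyP := iI U.
rewrite ab bc aU cU => /(_ isT) bU.
by move/eqP: UV; apply; apply: blk_eq tI UI VI bU bV.
Qed.

Lemma ip_outer n (I : {set {set 'I_n}}) : is_interval_part I -> outer_blocks I = I.
Proof.
move=> ipI; have /andP[pI _] := ipI; have [tI I0 bI] := partP pI.
apply/setP => V; apply/outerP/idP => [[]//|VI]; split => // W WI; apply/negP => nVW.
have := nested_sub nVW; rewrite (ip_hull ipI WI) => VW.
have [x xV] := set0Pn _ (I0 _ VI).
by move: nVW => /andP[/eqP[]]; apply: blk_eq tI WI VI (subsetP VW _ xV) xV.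
Qed.

Lemma enum_sorted k (A : {set 'I_k}) : sorted (fun x y : 'I_k => x < y) (enum A).
Proof.
rewrite /enum_mem -enumT; apply: sorted_filter => [x y z|]; first exact: ltn_trans.
by have := iota_ltn_sorted 0 k; rewrite -val_enum_ord sorted_map.
Qed.

Lemma enum_mono n (W : {set 'I_n}) (x y : 'I_#|W|) :
  (enum_val x < enum_val y) = (x < y).
Proof.
have [w0 _ _] : exists2 w, w \in W & True.
  by have := enum_valP x; move=> h; exists (enum_val x).
rewrite !(enum_val_nth w0).
have hs := sorted_ltn_nth (leT := fun x y : 'I_n => x < y) ltn_trans w0 (enum_sorted W).
have sz (z : 'I_#|W|) : (z : nat) \in [pred k | k < size (enum W)] by rewrite inE -cardE ltn_ord.
case: (ltngtP x y) => [xy|yx|e].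
- exact: hs (sz x) (sz y) xy.
- by apply/negbTE; rewrite -leqNgt ltnW // (hs _ _ (sz y) (sz x) yx).
- by rewrite (val_inj e) ltnn.
Qed.

Lemma enum_img n (W : {set 'I_n}) : (@enum_val _ (mem W)) @: setT = W.
Proof.
apply/setP => x; apply/imsetP/idP => [[i _ ->]|xW]; first exact: enum_valP.
by exists (enum_rank_in xW x) => //; rewrite enum_rankK_in.
Qed.


Section CL.
Local Open Scope ring_scope.
Variables (R : comPzRingType) (M : Type) (beta rc rp : seq M -> R).
Hypothesis Hmc : forall m (b : 'I_m -> M),
  \sum_(s : {set {set 'I_m}} | is_interval_part s) \prod_(V in s) restr beta b V =
  \sum_(s : {set {set 'I_m}} | is_NC s) Fo rc rp b s.

Lemma nc_split m (F : {set {set 'I_m}} -> R) :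
  \sum_(P | is_NC P) F P =
  \sum_(I | is_interval_part I) \sum_(P | is_NC P && irr_refines P I) F P.
Proof.
symmetry; rewrite (exchange_big_dep (fun P => is_NC P)) /=; last by move=> I P _ /andP[].
apply: eq_bigr => P ncP; rewrite (big_pred1 (iclos P)) // => I /=.
apply/idP/eqP => [/andP[ipI /andP[_ rPI]]|->]; first exact: iclos_uniq.
by rewrite ncP andTb; apply: iclos_ok.
Qed.

Lemma restr_tr n (a : 'I_n -> M) (W : {set 'I_n}) (r : seq M -> R) :
  restr r a W = restr r (a \o @enum_val _ (mem W)) setT.
Proof. by have := restr_im (@enum_mono n W) r a setT; rewrite enum_img. Qed.

Lemma G_tr n (a : 'I_n -> M) (W : {set 'I_n}) (rc' rp' : seq M -> R) : W != set0 ->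
  G rc' rp' a W = G rc' rp' (a \o @enum_val _ (mem W)) setT.
Proof.
move=> W0; have m0 : (0 < #|W|)%N by rewrite card_gt0.
by have := G_im (@enum_mono n W) rc' rp' a m0; rewrite enum_img.
Qed.

Lemma CL_top m : (0 < m)%N -> forall b : 'I_m -> M, restr beta b setT = G rc rp b setT.
Proof.
elim/ltn_ind: m => m IH m0 b.
set T := [set [set: 'I_m]].
have ipT : is_interval_part T.
  apply/andP; split.
    apply/and3P; split.
    - by rewrite cover1.
    - exact: trivIset1.
    - by rewrite inE eq_sym; apply/set0Pn; exists (Ordinal m0).
  apply/forallP => V; apply/implyP; rewrite inE => /eqP ->.
  by apply/forallP => i; apply/forallP => j; apply/forallP => k; apply/implyP => _; exact: in_setT.
have key I : is_interval_part I -> I != T ->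
    \prod_(V in I) restr beta b V = \prod_(V in I) G rc rp b V.
  move=> ipI IT; have /andP[pI _] := ipI; have [tI I0 bI] := partP pI.
  apply: eq_bigr => V VI.
  have VT : V != setT.
    apply/negP => /eqP eV; move/negP: IT; apply; apply/eqP/setP => U; rewrite inE.
    apply/idP/eqP => [UI|->]; last by rewrite -eV.
    have [x xU] := set0Pn _ (I0 _ UI).
    by rewrite (blk_eq tI UI VI xU) // eV inE.
  have lt : (#|V| < m)%N.
    by have := @proper_card _ V setT; rewrite properT VT cardsT card_ord; apply.
  have V0 := I0 _ VI.
  rewrite restr_tr G_tr //; apply: IH => //; by rewrite card_gt0.
have HS := Hmc b; rewrite nc_split in HS.
have E2 : \sum_(I | is_interval_part I)
      \sum_(P | is_NC P && irr_refines P I) Fo rc rp b P =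
    \sum_(I | is_interval_part I) \prod_(V in I) G rc rp b V.
  apply: eq_bigr => I ipI; rewrite (L_main _ _ _ (ip_nc ipI)).
  by apply: eq_bigr => W WI; rewrite ip_outer // WI.
rewrite E2 in HS.
rewrite (bigD1 T ipT) [X in _ = X](bigD1 T ipT) /= in HS.
have E3 : \sum_(I | is_interval_part I && (I != T)) \prod_(V in I) restr beta b V =
    \sum_(I | is_interval_part I && (I != T)) \prod_(V in I) G rc rp b V.
  by apply: eq_bigr => I /andP[ipI IT]; apply: key.
by rewrite E3 in HS; move/addIr: HS; rewrite !big_set1.
Qed.

Lemma CL n (a : 'I_n -> M) (W : {set 'I_n}) : W != set0 ->
  restr beta a W = G rc rp a W.
Proof.
move=> W0; rewrite restr_tr G_tr //; apply: CL_top; by rewrite card_gt0.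
Qed.

End CL.

Local Open Scope ring_scope.

Theorem proposition3p5 (C : numClosedFieldType) (M : algType C)
    (star : M -> M) (phi psi : M -> C)
    (bphi bpsi rpsi rc : seq M -> C) :
  is_star_involution star ->
  is_state star phi -> is_state star psi -> is_tracial psi ->
  is_boolean_cumulants phi bphi ->
  is_boolean_cumulants psi bpsi ->
  is_free_cumulants psi rpsi ->
  is_cfree_cumulants phi rpsi rc ->
  forall (n : nat) (pi : {set {set 'I_n}}), is_NC pi ->
  forall a : 'I_n -> M,
    beta2 bphi bpsi pi a =
    \sum_(rho : {set {set 'I_n}} | is_NC rho && irr_refines rho pi)
      (\prod_(V in outer_blocks rho) restr rc a V) *
      (\prod_(W in inner_blocks rho) restr rpsi a W).
Proof.
move=> _ _ _ _ Hbphi Hbpsi Hfree Hcfree n pi ncpi a.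
have Hphi m (b : 'I_m -> M) :
    \sum_(s : {set {set 'I_m}} | is_interval_part s) \prod_(V in s) restr bphi b V =
    \sum_(s : {set {set 'I_m}} | is_NC s) Fo rc rpsi b s.
  by rewrite -Hbphi Hcfree.
have Hpsi m (b : 'I_m -> M) :
    \sum_(s : {set {set 'I_m}} | is_interval_part s) \prod_(V in s) restr bpsi b V =
    \sum_(s : {set {set 'I_m}} | is_NC s) Fo rpsi rpsi b s.
  rewrite -Hbpsi Hfree; apply: eq_bigr => s _; rewrite FoE.
  by apply: eq_bigr => V _; case: ifP.
have /andP[ppi _] := ncpi; have [_ P0 _] := partP ppi.
transitivity (Fo bphi bpsi a pi); first by [].
rewrite FoE.
transitivity (\prod_(W in pi)
   (if W \in outer_blocks pi then G rc rpsi a W else G rpsi rpsi a W)).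
  apply: eq_bigr => W WI; case: ifP => _.
    exact: (CL Hphi a (P0 _ WI)).
  exact: (CL Hpsi a (P0 _ WI)).
by rewrite -L_main.
Qed.
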